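(* Let $m>0$, let $S:M\to\mathbb{R}$ be a smooth function and let $\digamma_0$ be a smooth section of the even Clifford bundle $\mathcal{C\ell}^0(M,\eta)$ which is invertible at every point and satisfies $$-\boldsymbol{\partial}S=m\,\digamma_0\gamma^{0}\digamma_0^{-1}.$$ Put $\digamma=\digamma_0\,e^{S\gamma^{21}}$. If $\digamma$ satisfies the free Dirac-Hestenes equation $$\boldsymbol{\partial}\digamma\,\gamma^{21}-m\,\digamma\gamma^{0}=0,$$ then $\digamma_0$ satisfies the massless Dirac-Hestenes equation $\boldsymbol{\partial}\digamma_0=0$.
   Context: Minkowski spacetime $M\simeq\mathbb{R}^4$ with metric $\eta=\mathrm{diag}(1,-1,-1,-1)$ and global coordinates $\{x^\mu\}$. The $1$-forms $\gamma^\mu=dx^\mu$ are regarded as sections of the Clifford bundle of differential forms $\mathcal{C\ell}(M,\eta)$; juxtaposition denotes the Clifford product, with $\gamma^\mu\gamma^\nu+\gamma^\nu\gamma^\mu=2\eta^{\mu\nu}$. $\gamma^{21}:=\gamma^2\gamma^1$ (so $(\gamma^{21})^2=-1$) and $e^{S\gamma^{21}}=\cos S+\gamma^{21}\sin S$. The Dirac operator is $\boldsymbol{\partial}=\gamma^\mu\partial_\mu$, acting on a Clifford field $\psi$ by $\boldsymbol{\partial}\psi=\gamma^\mu(\partial_\mu\psi)$ (left Clifford multiplication); on a scalar function it gives $\boldsymbol{\partial}S=\gamma^\mu\partial_\mu S=dS$. $\mathcal{C\ell}^0(M,\eta)$ is the even subbundle (sums of $0$-, $2$- and $4$-forms). 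*)

(* Defs.v *)
From HB Require Import structures.
From mathcomp Require Import all_boot all_order all_algebra.
From mathcomp Require Import all_classical all_reals all_analysis.
Set Implicit Arguments. Unset Strict Implicit. Unset Printing Implicit Defensive.
Import Order.TTheory GRing.Theory Num.Theory.
Import numFieldNormedType.Exports.
Local Open Scope classical_set_scope.
Local Open Scope ring_scope.

(* The real Clifford algebra Cl(1,3) of Minkowski space, realized on the  *)
(* 16-dimensional space 'rV[R]_16.  The basis blade with index a : 'I_16  *)
(* (viewed as a 4-bit mask) is the ordered product gamma^{i1}...gamma^{ik} *)
(* with i1 < ... < ik the set bits of a.                                   *)

Definition bit (n k : nat) : bool := odd (n %/ 2 ^ k).

(* number of transpositions needed to sort the concatenation a ++ b *)
Definition swaps (a b : nat) : nat :=
  \sum_(i < 4 | bit b i) \sum_(j < 4 | bit a j && (i < j)%N) 1.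

(* number of repeated generators with eta^{ii} = -1 (i = 1,2,3) *)
Definition negsq (a b : nat) : nat :=
  \sum_(i < 4 | bit a i && bit b i && (i != 0%N :> nat)) 1.

Definition bxor (a b : nat) : nat :=
  \sum_(i < 4 | bit a i != bit b i) 2 ^ i.

Definition grade (a : nat) : nat := \sum_(i < 4 | bit a i) 1.

Section Clifford.
Variable R : realType.

Notation Cl := 'rV[R]_16.

Definition blade_sign (a b : nat) : R := (-1) ^+ (swaps a b + negsq a b).

Definition clmul (x y : Cl) : Cl :=
  \row_(c < 16) \sum_(a < 16) \sum_(b < 16)
     (if bxor a b == c :> nat then blade_sign a b * x 0 a * y 0 b else 0).

Definition blade (a : 'I_16) : Cl := delta_mx 0 a.

Definition clone : Cl := blade (inord 0).
Definition scal (s : R) : Cl := s *: clone.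

(* generators gamma^mu = dx^mu, mu = 0,1,2,3 *)
Definition gam (mu : 'I_4) : Cl := blade (inord (2 ^ mu)).

Definition gam21 : Cl := clmul (gam (inord 2)) (gam (inord 1)).

(* e^{s gamma^{21}} = cos s + gamma^{21} sin s *)
Definition clexp21 (s : R) : Cl := cos s *: clone + sin s *: gam21.

Definition cl_invertible (x : Cl) : Prop :=
  exists y, clmul x y = clone /\ clmul y x = clone.

(* the inverse (0 if not invertible) *)
Definition clinv (x : Cl) : Cl :=
  xget 0 [set y | clmul x y = clone /\ clmul y x = clone].

Definition even_cl (x : Cl) : Prop :=
  forall a : 'I_16, odd (grade a) -> x 0 a = 0.

(* Calculus on M = R^4 (points are row vectors, coordinates x^mu).        *)

Definition coordvec (mu : 'I_4) : 'rV[R]_4 := delta_mx 0 mu.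

Definition partial {V : normedModType R} (f : 'rV[R]_4 -> V) (mu : 'I_4)
  (x : 'rV[R]_4) : V := derive f x (coordvec mu).

Fixpoint Ck {V : normedModType R} (k : nat) (f : 'rV[R]_4 -> V) : Prop :=
  match k with
  | 0%N => continuous f
  | k'.+1 => (forall x, differentiable f x) /\ forall mu, Ck k' (partial f mu)
  end.

Definition smooth {V : normedModType R} (f : 'rV[R]_4 -> V) : Prop :=
  forall k, Ck k f.

Definition dirac_op (psi : 'rV[R]_4 -> Cl) (x : 'rV[R]_4) : Cl :=
  \sum_(mu < 4) clmul (gam mu) (partial psi mu x).

End Clifford.

Arguments clmul {R}. Arguments blade {R}. Arguments clone {R}. Arguments scal {R}.
Arguments gam {R}. Arguments gam21 {R}. Arguments clexp21 {R}.
Arguments cl_invertible {R}. Arguments clinv {R}. Arguments even_cl {R}.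
Arguments coordvec {R}. Arguments partial {R V}. Arguments Ck {R V}.
Arguments smooth {R V}. Arguments dirac_op {R}.

(* Main.v *)
Require Import Defs.
From HB Require Import structures.
From mathcomp Require Import all_boot all_order all_algebra.
From mathcomp Require Import all_classical all_reals all_analysis.
From mathcomp Require Import ring.
Import Order.TTheory GRing.Theory Num.Theory.
Import numFieldNormedType.Exports.
Local Open Scope ring_scope.

Ltac bexp := rewrite ?big_mkcond /=; repeat (rewrite big_ord_recr /=); rewrite ?big_ord0 /=.
Ltac bcase a b := by case: (bit b 0); case: (bit b 1); case: (bit b 2); case: (bit b 3);
   case: (bit a 0); case: (bit a 1); case: (bit a 2); case: (bit a 3).

Definition sw' a b := (bit b 0 * (bit a 1 + bit a 2 + bit a 3) + bit b 1 * (bit a 2 + bit a 3) + bit b 2 * bit a 3)%N.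
Definition ng' a b := ((bit a 1 && bit b 1) + (bit a 2 && bit b 2) + (bit a 3 && bit b 3))%N.
Definition bx' a b := ((bit a 0 != bit b 0) + (bit a 1 != bit b 1) * 2 + (bit a 2 != bit b 2) * 4 + (bit a 3 != bit b 3) * 8)%N.

Lemma swE a b : swaps a b = sw' a b.
Proof. rewrite /swaps /sw'; do 6 bexp. bcase a b. Qed.
Lemma ngE a b : negsq a b = ng' a b.
Proof. rewrite /negsq /ng'; bexp. bcase a b. Qed.
Lemma bxE a b : bxor a b = bx' a b.
Proof. rewrite /bxor /bx'; bexp. bcase a b. Qed.

Definition P3 a b e := [&& (bx' a b < 16)%N, bx' (bx' a b) e == bx' a (bx' b e) &
  odd (sw' a b + ng' a b + sw' (bx' a b) e + ng' (bx' a b) e) ==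
  odd (sw' b e + ng' b e + sw' a (bx' b e) + ng' a (bx' b e))].
Lemma chk3 : all (fun a => all (fun b => all (fun e => P3 a b e) (iota 0 16)) (iota 0 16)) (iota 0 16).
Proof. vm_compute. reflexivity. Qed.

Lemma P3E (a b e : 'I_16) : P3 a b e.
Proof.
have /allP/(_ a) := chk3; rewrite mem_iota ltn_ord => /(_ isT).
move/allP/(_ b); rewrite mem_iota ltn_ord => /(_ isT).
by move/allP/(_ e); rewrite mem_iota ltn_ord => /(_ isT).
Qed.

Lemma bxor_lt (a b : 'I_16) : (bxor a b < 16)%N.
Proof. by have /and3P[h _ _] := P3E a b ord0; rewrite bxE. Qed.

Definition P1 a := [&& bx' a 0 == a, bx' 0 a == a, (sw' a 0 + ng' a 0 == 0)%N & (sw' 0 a + ng' 0 a == 0)%N].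
Lemma chk1 : all P1 (iota 0 16).
Proof. vm_compute. reflexivity. Qed.
Lemma P1E (a : 'I_16) : P1 a.
Proof. by have /allP/(_ a) := chk1; rewrite mem_iota ltn_ord => /(_ isT). Qed.

Section Alg.
Variable R : realType.
Notation Cl := 'rV[R]_16.
Implicit Types x y z : Cl.
Local Notation B := (@blade R).

Lemma clmulDl x y z : clmul (x + y) z = clmul x z + clmul y z.
Proof.
apply/rowP=> c; rewrite !mxE -big_split; apply: eq_bigr => a _.
rewrite -big_split; apply: eq_bigr => b _; rewrite !mxE.
by case: ifP => _; rewrite /= ?mulrDr ?mulrDl ?addr0.
Qed.
Lemma clmulDr x y z : clmul x (y + z) = clmul x y + clmul x z.
Proof.
apply/rowP=> c; rewrite !mxE -big_split; apply: eq_bigr => a _.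
rewrite -big_split; apply: eq_bigr => b _; rewrite !mxE.
by case: ifP => _; rewrite /= ?mulrDr ?mulrDl ?addr0.
Qed.
Lemma clmulZl k x y : clmul (k *: x) y = k *: clmul x y.
Proof.
apply/rowP=> c; rewrite !mxE mulr_sumr; apply: eq_bigr => a _.
rewrite mulr_sumr; apply: eq_bigr => b _; rewrite !mxE.
by case: ifP => _; [ring | rewrite mulr0].
Qed.
Lemma clmulZr k x y : clmul x (k *: y) = k *: clmul x y.
Proof.
apply/rowP=> c; rewrite !mxE mulr_sumr; apply: eq_bigr => a _.
rewrite mulr_sumr; apply: eq_bigr => b _; rewrite !mxE.
by case: ifP => _; [ring | rewrite mulr0].
Qed.
Lemma clmul0l x : clmul 0 x = 0.
Proof. by rewrite -[X in clmul X _](scale0r (0:Cl)) clmulZl scale0r. Qed.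
Lemma clmul0r x : clmul x 0 = 0.
Proof. by rewrite -[X in clmul _ X](scale0r (0:Cl)) clmulZr scale0r. Qed.
Lemma clmulNl x y : clmul (- x) y = - clmul x y.
Proof. by rewrite -scaleN1r clmulZl scaleN1r. Qed.
Lemma clmulNr x y : clmul x (- y) = - clmul x y.
Proof. by rewrite -scaleN1r clmulZr scaleN1r. Qed.
Lemma clmulBl x y z : clmul (x - y) z = clmul x z - clmul y z.
Proof. by rewrite clmulDl clmulNl. Qed.
Lemma clmulBr x y z : clmul x (y - z) = clmul x y - clmul x z.
Proof. by rewrite clmulDr clmulNr. Qed.
Lemma clmul_suml n (f : 'I_n -> Cl) z : clmul (\sum_(i < n) f i) z = \sum_(i < n) clmul (f i) z.
Proof. exact: (big_morph (fun x => clmul x z) (fun x y => clmulDl x y z) (clmul0l z)). Qed.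
Lemma clmul_sumr n (f : 'I_n -> Cl) z : clmul z (\sum_(i < n) f i) = \sum_(i < n) clmul z (f i).
Proof. exact: (big_morph (fun x => clmul z x) (fun x y => clmulDr z x y) (clmul0r z)). Qed.

Lemma clmul_blade (a b : 'I_16) :
  clmul (blade a) (blade b) = blade_sign R a b *: blade (inord (bxor a b)).
Proof.
apply/rowP=> c; rewrite !mxE.
under eq_bigr => a' _ do under eq_bigr => b' _ do rewrite !mxE eqxx /=.
rewrite (bigD1 a) //= [X in _ + X]big1 ?addr0; last first.
  by move=> a' /negPf na; apply: big1 => b' _; rewrite na mulr0 mul0r if_same.
rewrite (bigD1 b) //= [X in _ + X]big1 ?addr0; last first.
  by move=> b' /negPf nb; rewrite nb mulr0 if_same.
rewrite !eqxx !mulr1.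
have h := bxor_lt a b.
have -> : (c == inord (bxor a b)) = (bxor a b == c).
  by rewrite -(inj_eq val_inj) /= inordK // eq_sym.
by case: ifP; rewrite ?mulr1 ?mulr0.
Qed.

Lemma clmul_bladeA (a b e : 'I_16) :
  clmul (clmul (B a) (B b)) (B e) = clmul (B a) (clmul (B b) (B e)).
Proof.
rewrite !clmul_blade clmulZl clmulZr !clmul_blade !scalerA.
rewrite !inordK ?bxor_lt //.
have /and3P[_ /eqP h1 /eqP h2] := P3E a b e.
rewrite -!bxE -!swE -!ngE in h1 h2.
rewrite h1; congr (_ *: _).
rewrite /blade_sign -!exprD -signr_odd !addnA h2 signr_odd.
by [].

Qed.

Lemma clmulA x y z : clmul (clmul x y) z = clmul x (clmul y z).
Proof.
have s1 (a b : 'I_16) z' : clmul (clmul (B a) (B b)) z' = clmul (B a) (clmul (B b) z').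
  rewrite (row_sum_delta z') !clmul_sumr; apply: eq_bigr => j _.
  by rewrite !clmulZr clmul_bladeA.
have s2 (a : 'I_16) y' z' : clmul (clmul (B a) y') z' = clmul (B a) (clmul y' z').
  rewrite (row_sum_delta y') clmul_sumr !clmul_suml clmul_sumr; apply: eq_bigr => j _.
  by rewrite !clmulZr !clmulZl clmulZr s1.
rewrite (row_sum_delta x) !clmul_suml; apply: eq_bigr => j _.
by rewrite !clmulZl s2.
Qed.

Lemma bladeN (a b : nat) : (a < 16)%N -> (b < 16)%N ->
  clmul (B (inord a)) (B (inord b)) = blade_sign R a b *: B (inord (bxor a b)).
Proof. by move=> ha hb; rewrite clmul_blade !inordK. Qed.

Lemma clmul1r x : clmul x clone = x.
Proof.
rewrite /clone (row_sum_delta x) clmul_suml; apply: eq_bigr => j _.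
rewrite clmulZl; congr (_ *: _).
have /and4P[/eqP h1 _ /eqP h3 _] := P1E j.
rewrite -bxE in h1; rewrite -swE -ngE in h3.
rewrite clmul_blade inordK // h1 /blade_sign h3 expr0 scale1r.
by congr blade; apply: val_inj; rewrite /= inordK.
Qed.

Lemma clmul1l x : clmul clone x = x.
Proof.
rewrite /clone (row_sum_delta x) clmul_sumr; apply: eq_bigr => j _.
rewrite clmulZr; congr (_ *: _).
have /and4P[_ /eqP h2 _ /eqP h4] := P1E j.
rewrite -bxE in h2; rewrite -swE -ngE in h4.
rewrite clmul_blade inordK // h2 /blade_sign h4 expr0 scale1r.
by congr blade; apply: val_inj; rewrite /= inordK.
Qed.

Lemma gamE (n : nat) : (n < 4)%N -> @gam R (inord n) = B (inord (2 ^ n)).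
Proof. by move=> h; rewrite /gam inordK. Qed.

Lemma gam21E : @gam21 R = - B (inord 6).
Proof.
rewrite /gam21 !gamE // bladeN //= /blade_sign swE ngE bxE.
by rewrite /= expr1 scaleN1r.
Qed.

Lemma gam21_sq : clmul gam21 gam21 = - @clone R.
Proof.
rewrite gam21E clmulNl clmulNr opprK bladeN // /blade_sign swE ngE bxE /=.
by rewrite /clone -signr_odd /= expr1 scaleN1r.
Qed.

Lemma gam0_21 : clmul (gam (inord 0)) gam21 = clmul gam21 (@gam R (inord 0)).
Proof.
rewrite gam21E clmulNl clmulNr gamE // bladeN // bladeN // /blade_sign !swE !ngE !bxE.
have e1 : (sw' (2^0) 6 + ng' (2^0) 6 = 0)%N by vm_compute.
have e2 : (sw' 6 (2^0) + ng' 6 (2^0) = 2)%N by vm_compute.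
have e3 : bx' (2^0) 6 = bx' 6 (2^0) by vm_compute.
by rewrite e1 e2 e3 expr0 sqrrN expr1n.
Qed.

Lemma clmul_scal x k : clmul x (scal k) = k *: x.
Proof. by rewrite /scal clmulZr clmul1r. Qed.

End Alg.

Section Ana.
Variable R : realType.
Local Notation V := 'rV[R]_4.
Local Notation Cl := 'rV[R]_16.

Lemma is_derive_ext (W : normedModType R) (f g : V -> W) x v d :
  f = g -> is_derive x v f d -> is_derive x v g d.
Proof. by move=> ->. Qed.

Lemma is_derive_coord m n (M : V -> 'M[R]_(m, n)) x v (D : 'M[R]_(m, n)) i j :
  is_derive x v M D -> is_derive x v (fun y => M y i j) (D i j).
Proof.
case=> dM vM; apply: DeriveDef; first exact: ((derivable_mxP M x v).1 dM i j).
by have := derive_mx dM; rewrite vM => ->; rewrite mxE.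
Qed.
Arguments is_derive_coord {m n M x v D}.

Lemma is_derive_mx m n (M : V -> 'M[R]_(m, n)) x v (D : 'M[R]_(m, n)) :
  (forall i j, is_derive x v (fun y => M y i j) (D i j)) -> is_derive x v M D.
Proof.
move=> h; have dM : derivable M x v.
  by apply/derivable_mxP => i j; case: (h i j).
apply: DeriveDef => //; rewrite derive_mx //; apply/matrixP => i j.
by rewrite mxE; case: (h i j).
Qed.

Lemma is_derive_sumf n (h : 'I_n -> V -> R) x v (dh : 'I_n -> R) :
  (forall i, is_derive x v (h i) (dh i)) ->
  is_derive x v (fun y => \sum_(i < n) h i y) (\sum_(i < n) dh i).
Proof. by move=> H; have := is_derive_sum H; rewrite fct_sumE. Qed.

Lemma is_derive_clmul (f g : V -> Cl) x v (df dg : Cl) :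
  is_derive x v f df -> is_derive x v g dg ->
  is_derive x v (fun y => clmul (f y) (g y)) (clmul df (g x) + clmul (f x) dg).
Proof.
move=> hf hg; apply: is_derive_mx => i c; rewrite (ord1 i).
have -> : (clmul df (g x) + clmul (f x) dg) 0 c =
   \sum_(a < 16) \sum_(b < 16) (if bxor a b == c then
      blade_sign R a b * (df 0 a * g x 0 b + f x 0 a * dg 0 b) else 0).
  rewrite !mxE -big_split; apply: eq_bigr => a _.
  rewrite -big_split; apply: eq_bigr => b _.
  by case: ifP => _; rewrite /= ?addr0 //; ring.
apply: (@is_derive_ext _ (fun y => \sum_(a < 16) \sum_(b < 16) (if bxor a b == c then
      blade_sign R a b * f y 0 a * g y 0 b else 0))).
  by apply/funext => y; rewrite mxE.
apply: is_derive_sumf => a; apply: is_derive_sumf => b.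
case: ifP => _; last first.
  exact: (@is_derive_ext _ (cst 0)).
have ha := is_derive_coord 0 a hf; have hb := is_derive_coord 0 b hg.
have := is_deriveM (is_deriveZ (blade_sign R a b) ha) hb.
move/is_derive_ext => /(_ (fun y => blade_sign R a b * f y 0 a * g y 0 b)).
move=> /(_ (funext (fun y => erefl))) H.
apply: is_derive_eq H _.
change (blade_sign R a b * f x 0 a * dg 0 b + g x 0 b * (blade_sign R a b * df 0 a) =
  blade_sign R a b * (df 0 a * g x 0 b + f x 0 a * dg 0 b)).
ring.
Qed.

Lemma is_derive_scalv (k : V -> R) (w : Cl) x v (dk : R) :
  is_derive x v k dk -> is_derive x v (fun y => k y *: w) (dk *: w).
Proof.
move=> hk; apply: is_derive_mx => i j.
have := is_deriveZ (w i j) hk; move/is_derive_ext => /(_ (fun y => (k y *: w) i j)) H.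
rewrite mxE; apply: (is_derive_eq (H _)).
  apply/funext => y; rewrite mxE; change (w i j * k y = k y * w i j); exact: mulrC.
change (w i j * dk = dk * w i j); exact: mulrC.
Qed.

Lemma is_derive_cosS (S : V -> R) x v : differentiable S x ->
  is_derive x v (fun y => cos (S y)) (- sin (S x) * 'D_v S x).
Proof.
move=> dS.
have dc : differentiable (@cos R) (S x) by apply/derivable1_diffP; exact: derivable_cos.
have dcS : differentiable (cos \o S) x by exact: differentiable_comp.
apply: DeriveDef; first exact: diff_derivable.
rewrite deriveE // diff_comp // diff1E // derive1E /=.
rewrite derive_val -deriveE //.
change ('D_v S x * (- sin (S x)) = - sin (S x) * 'D_v S x); exact: mulrC.
Qed.

Lemma is_derive_sinS (S : V -> R) x v : differentiable S x ->
  is_derive x v (fun y => sin (S y)) (cos (S x) * 'D_v S x).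
Proof.
move=> dS.
have dc : differentiable (@sin R) (S x) by apply/derivable1_diffP; exact: derivable_sin.
have dcS : differentiable (sin \o S) x by exact: differentiable_comp.
apply: DeriveDef; first exact: diff_derivable.
rewrite deriveE // diff_comp // diff1E // derive1E /=.
rewrite derive_val -deriveE //.
change ('D_v S x * cos (S x) = cos (S x) * 'D_v S x); exact: mulrC.
Qed.

End Ana.
Arguments is_derive_ext {R W f} g {x v d}.
Arguments is_derive_scalv {R k} w {x v dk}.
Arguments is_derive_cosS {R S x} v.
Arguments is_derive_sinS {R S x} v.
Arguments is_derive_clmul {R f g x v df dg}.

Theorem mainTheorem2 (R : realType) (m : R) (S : 'rV[R]_4 -> R)
  (F0 : 'rV[R]_4 -> 'rV[R]_16) :
  0 < m ->
  smooth S ->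
  smooth F0 ->
  (forall x, even_cl (F0 x)) ->
  (forall x, cl_invertible (F0 x)) ->
  (forall x, - dirac_op (fun y => scal (S y)) x
             = m *: clmul (clmul (F0 x) (gam (inord 0))) (clinv (F0 x))) ->
  let F := fun x => clmul (F0 x) (clexp21 (S x)) in
  (forall x, clmul (dirac_op F x) gam21 - m *: clmul (F x) (gam (inord 0)) = 0) ->
  forall x, dirac_op F0 x = 0.
Proof.
move=> hm hS hF0 hev hinv hdS F hF x.
have dS y : differentiable S y := (hS 1%N).1 y.
have dF0 y : differentiable F0 y := (hF0 1%N).1 y.
pose K : 'rV[R]_16 := - sin (S x) *: clone + cos (S x) *: gam21.
have hpF mu : partial F mu x = clmul (partial F0 mu x) (clexp21 (S x))
    + clmul (F0 x) (partial S mu x *: K).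
  have hE : is_derive x (coordvec mu) (fun y => clexp21 (S y))
     ((- sin (S x) * partial S mu x) *: clone + (cos (S x) * partial S mu x) *: gam21).
    have h1 := is_derive_scalv clone (is_derive_cosS (coordvec mu) (dS x)).
    have h2 := is_derive_scalv gam21 (is_derive_sinS (coordvec mu) (dS x)).
    apply: (is_derive_ext _ _ (is_deriveD h1 h2)).
    by apply/funext => y.
  have hF0d : is_derive x (coordvec mu) F0 (partial F0 mu x).
    by apply: derivableP; exact: diff_derivable.
  rewrite {1}/partial /F; have := is_derive_clmul hF0d hE; case => _ ->.
  congr (_ + clmul _ _).
  by rewrite /K scalerDr !scalerA; congr (_ *: _ + _ *: _); apply: mulrC.
have hpS mu : partial (fun y => scal (S y)) mu x = partial S mu x *: clone.
  have hSd : is_derive x (coordvec mu) S (partial S mu x).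
    by apply: derivableP; exact: diff_derivable.
  by rewrite {1}/partial /scal; have := is_derive_scalv clone hSd; case => _ ->.
have eq1 : dirac_op F x = clmul (dirac_op F0 x) (clexp21 (S x))
    + clmul (clmul (dirac_op (fun y => scal (S y)) x) (F0 x)) K.
  rewrite /dirac_op.
  under eq_bigr => mu _ do rewrite hpF clmulDr.
  rewrite big_split /=; congr (_ + _).
    by rewrite clmul_suml; apply: eq_bigr => mu _; rewrite clmulA.
  rewrite !clmul_suml; apply: eq_bigr => mu _.
  by rewrite hpS !clmulZr !clmulZl clmul1r clmulA.
have hinvA : clmul (clinv (F0 x)) (F0 x) = clone.
  by have [_ ->] := @xgetPex _ 0 [set y | clmul (F0 x) y = clone /\ clmul y (F0 x) = clone] (hinv x).
have eq2 : clmul (dirac_op (fun y => scal (S y)) x) (F0 x) = - m *: clmul (F0 x) (gam (inord 0)).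
  rewrite -[dirac_op _ x]opprK hdS.
  by rewrite clmulNl clmulZl clmulA hinvA clmul1r scaleNr.
have hX : clmul (clmul (- m *: clmul (F0 x) (gam (inord 0))) K) gam21
    = m *: clmul (clmul (F0 x) (clexp21 (S x))) (gam (inord 0)).
  rewrite [in LHS]clmulA clmulZl /K clmulDl !clmulZl clmul1l gam21_sq.
  rewrite [in RHS]clmulA /clexp21 clmulDl !clmulZl clmul1l -gam0_21.
  rewrite clmulDr !clmulZr clmulNr clmul1r clmulDr !clmulZr -[clmul (F0 x) (clmul _ _)]clmulA.
  move: (clmul (clmul (F0 x) (gam (inord 0))) gam21) (clmul (F0 x) (gam (inord 0))) => u w.
  by apply/rowP => i; rewrite !mxE; ring.
have key : clmul (dirac_op F0 x) (clmul (clexp21 (S x)) gam21) = 0.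
  have := hF x; rewrite eq1 eq2 clmulDl hX /F addrK clmulA; exact.
have hQ : clmul (clmul (clexp21 (S x)) gam21)
    (- (cos (S x) *: gam21 + sin (S x) *: clone)) = clone :> 'rV[R]_16.
  rewrite /clexp21.
  do 3 rewrite ?clmulDl ?clmulDr ?clmulZl ?clmulZr ?clmulNl ?clmulNr ?clmul1l ?clmul1r ?gam21_sq.
  have h := cos2Dsin2 (S x).
  move: (@gam21 R) (@clone R) => G O.
  apply/rowP => i; rewrite !mxE.
  apply: (@eq_trans _ _ ((cos (S x) ^+ 2 + sin (S x) ^+ 2) * O 0 i)); first ring.
  by rewrite h mul1r.
by rewrite -[dirac_op F0 x]clmul1r -hQ -clmulA key clmul0l.
Qed.
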